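(* Let $\mathcal S$ be a convex Sawtooth model with $n$ upper particles, let $1\le s\le r$ and $t\in[0,1]$. Then $x\mapsto F_{X_s\mid X_r=x}(t)$ is nonincreasing (for $r\le n+1$) and $y\mapsto F_{X_s\mid Y_r=y}(t)$ is nonincreasing (for $r\le n$). Moreover, for $r\le n$ and all $x,y\in[0,1]$, $$F^{\mathcal S_{\to X_r}}_{X_s}(t)\le F_{X_s\mid Y_r=y}(t)\qquad\text{and}\qquad F^{\mathcal S_{\to Y_r}}_{X_s}(t)\ge F_{X_s\mid X_{r+1}=x}(t).$$
   Context: A (type $--$) Sawtooth model with $n\ge1$ upper particles is specified by functions $f_1,g_1,\dots,f_n,g_n:[0,1]\to[0,\infty)$, each nondecreasing, $C^1$ and not identically zero. It is the probability space $[0,1]^{n+1}\times[0,1]^n$ with probability density at $(x_1,\dots,x_{n+1},y_1,\dots,y_n)$ equal to $\frac{1}{\mathcal V}\prod_{i=1}^n\mathbf 1_{\{x_i\le y_i\}}\mathbf 1_{\{x_{i+1}\le y_i\}}f_i(y_i-x_i)\,g_i(y_i-x_{i+1})$, $\mathcal V$ being the normalizing constant. The coordinates $X_1,\dots,X_{n+1}$ are the lower particles and $Y_1,\dots,Y_n$ the upper particles (ordered $X_1,Y_1,X_2,\dots,Y_n,X_{n+1}$). The model is convex if every $f_i,g_i$ is positive on $(0,1]$ and log-concave, i.e. $f_i'/f_i$ and $g_i'/g_i$ are nonincreasing. Conditional cumulative distribution functions $F_{U\mid V=v}(t)=\mathbb P(U\le t\mid V=v)$ are computed from the joint density. For a particle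 $P$, $\mathcal S_{\to P}$ is the model obtained by keeping only the particles from $X_1$ up to $P$ and the interaction factors among them (if $P=Y_r$ the last factor is $f_r(y_r-x_r)$); $F^{\mathcal S_{\to P}}_U$ is the cumulative distribution function of particle $U$ in $\mathcal S_{\to P}$. *)

(* Defs.v *)
From Stdlib Require Import Reals Lra Lia Arith ClassicalEpsilon.
Open Scope R_scope.

(** Riemann integral of h over [a,b]; 0 by convention if h is not
    Riemann integrable (the value does not depend on the integrability proof). *)
Definition RInt (h : R -> R) (a b : R) : R :=
  match excluded_middle_informative
          (exists v : R, exists pr : Riemann_integrable h a b, RiemannInt pr = v) with
  | left H => proj1_sig (constructive_indefinite_description _ H)
  | right _ => 0
  end.

Definition upd (z : nat -> R) (k : nat) (u : R) : nat -> R :=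
  fun i => if Nat.eqb i k then u else z i.

(** Iterated integral over [0,1] of F w.r.t. the coordinates i < k with sel i = true
    (coordinate 0 innermost); the other coordinates are taken from env. *)
Fixpoint iint (sel : nat -> bool) (k : nat) (F : (nat -> R) -> R) (env : nat -> R) : R :=
  match k with
  | O => F env
  | S k' => if sel k'
            then RInt (fun u => iint sel k' F (upd env k' u)) 0 1
            else iint sel k' F env
  end.

Definition ind (a b : R) : R := if Rle_dec a b then 1 else 0.

(** Particles are stored in the order X_1,Y_1,X_2,...,Y_n,X_{n+1} as coordinates
    z 0, z 1, ..., z (2n).  With 1-indexed particles: X_s is coordinate 2(s-1),
    Y_r is coordinate 2r-1.  f i, g i (i = 0..n-1) stand for f_{i+1}, g_{i+1}. *)
Definition posX (s : nat) : nat := 2 * (s - 1).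
Definition posY (r : nat) : nat := 2 * r - 1.

Definition edge (f g : nat -> R -> R) (e : nat) (z : nat -> R) : R :=
  if Nat.even e
  then ind (z e) (z (S e)) * f (Nat.div2 e) (z (S e) - z e)
  else ind (z (S e)) (z e) * g (Nat.div2 e) (z e - z (S e)).

Fixpoint W (f g : nat -> R -> R) (m : nat) (z : nat -> R) : R :=
  match m with
  | O => 1
  | S m' => W f g m' z * edge f g m' z
  end.

(** Conditional CDF  P(X_s <= t | particle at coordinate j = v) in the full model
    with n upper particles: ratio of the partially integrated density. *)
Definition condNum (n : nat) (f g : nat -> R -> R) (s j : nat) (v t : R) : R :=
  iint (fun i => negb (Nat.eqb i j)) (2 * n + 1)
       (fun z => W f g (2 * n) z * ind (z (posX s)) t) (fun i => v).
Definition condDen (n : nat) (f g : nat -> R -> R) (j : nat) (v : R) : R :=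
  iint (fun i => negb (Nat.eqb i j)) (2 * n + 1) (W f g (2 * n)) (fun i => v).
Definition condCDF (n : nat) (f g : nat -> R -> R) (s j : nat) (v t : R) : R :=
  condNum n f g s j v t / condDen n f g j v.

(** CDF of X_s in the truncated model S_{->P}, where P is the particle at
    coordinate m (so the truncated model has links 0..m-1 and coordinates 0..m). *)
Definition truncCDF (f g : nat -> R -> R) (m s : nat) (t : R) : R :=
  iint (fun _ => true) (m + 1) (fun z => W f g m z * ind (z (posX s)) t) (fun _ => 0)
  / iint (fun _ => true) (m + 1) (W f g m) (fun _ => 0).

Definition in01 (x : R) : Prop := 0 <= x <= 1.

Definition C1_on01 (h dh : R -> R) : Prop :=
  (forall x, in01 x -> forall eps, 0 < eps -> exists delta, 0 < delta /\
     forall y, in01 y -> y <> x -> Rabs (y - x) < delta ->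
       Rabs ((h y - h x) / (y - x) - dh x) < eps) /\
  (forall x, in01 x -> forall eps, 0 < eps -> exists delta, 0 < delta /\
     forall y, in01 y -> Rabs (y - x) < delta -> Rabs (dh y - dh x) < eps).

(** Admissible interaction function of a convex Sawtooth model: nonnegative,
    nondecreasing, C^1 on [0,1], not identically zero, positive on (0,1] and
    log-concave (h'/h nonincreasing on (0,1]). *)
Definition convex_factor (h : R -> R) : Prop :=
  (forall x, in01 x -> 0 <= h x) /\
  (forall a b, in01 a -> in01 b -> a <= b -> h a <= h b) /\
  (exists x, in01 x /\ h x <> 0) /\
  (forall x, 0 < x <= 1 -> 0 < h x) /\
  (exists dh, C1_on01 h dh /\
     forall a b, 0 < a -> a <= b -> b <= 1 -> dh b / h b <= dh a / h a).

(* Main.v *)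
Require Import Defs.
From Stdlib Require Import Reals.
From Stdlib Require Import Lra Lia Arith ClassicalEpsilon Classical FunctionalExtensionality.
From Coquelicot Require Import Coquelicot.
Open Scope R_scope.

Lemma RInt_scal_R (h:R->R) a b c: ex_RInt h a b -> RInt (fun u => c * h u) a b = c * RInt h a b.
Proof. intro H. exact (RInt_scal h a b c H). Qed.
Lemma ex_RInt_scal_R (h:R->R) a b c: ex_RInt h a b -> ex_RInt (fun u => c * h u) a b.
Proof. intro H. exact (ex_RInt_scal h a b c H). Qed.
Lemma RInt_const_R a b (c:R) : RInt (fun _ => c) a b = (b - a) * c.
Proof. exact (RInt_const a b c). Qed.
Lemma ex_RInt_const_R a b (c:R) : ex_RInt (fun _ => c) a b.
Proof. exact (ex_RInt_const a b c). Qed.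
Lemma RInt_minus_R (f g:R->R) a b : ex_RInt f a b -> ex_RInt g a b -> RInt (fun u => f u - g u) a b = RInt f a b - RInt g a b.
Proof. intros. exact (RInt_minus f g a b H H0). Qed.
Lemma ex_RInt_minus_R (f g:R->R) a b : ex_RInt f a b -> ex_RInt g a b -> ex_RInt (fun u => f u - g u) a b.
Proof. intros. exact (ex_RInt_minus f g a b H H0). Qed.
Lemma RInt_ext_R (f g:R->R) a b : (forall x, Rmin a b < x < Rmax a b -> f x = g x) -> RInt f a b = RInt g a b.
Proof. intros. exact (RInt_ext f g a b H). Qed.
Lemma ex_RInt_ext_R (f g:R->R) a b : (forall x, Rmin a b < x < Rmax a b -> f x = g x) -> ex_RInt f a b -> ex_RInt g a b.
Proof. intros. exact (ex_RInt_ext f g a b H H0). Qed.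
Lemma RInt_Chasles_R (f:R->R) a b c : ex_RInt f a b -> ex_RInt f b c -> RInt f a b + RInt f b c = RInt f a c.
Proof. intros. exact (RInt_Chasles f a b c H H0). Qed.
Lemma RInt_point_R (f:R->R) a : RInt f a a = 0.
Proof. exact (RInt_point a f). Qed.
Lemma ex_RInt_Chasles_R (f:R->R) a b c : ex_RInt f a b -> ex_RInt f b c -> ex_RInt f a c.
Proof. intros. exact (ex_RInt_Chasles f a b c H H0). Qed.

Lemma DR_int (h : R -> R) a b : ex_RInt h a b -> Defs.RInt h a b = RInt h a b.
Proof.
  intro H. unfold Defs.RInt. destruct excluded_middle_informative as [E|E].
  - destruct constructive_indefinite_description as [v [pr Hv]]. cbn.
    rewrite <- Hv. symmetry. apply RInt_Reals.
  - exfalso; apply E. exists (RiemannInt (ex_RInt_Reals_0 _ _ _ H)).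
    exists (ex_RInt_Reals_0 _ _ _ H). reflexivity.
Qed.

Lemma DR_nonint (h : R -> R) a b : ~ ex_RInt h a b -> Defs.RInt h a b = 0.
Proof.
  intro H. unfold Defs.RInt. destruct excluded_middle_informative as [E|E].
  - exfalso. destruct E as [v [pr _]]. apply H. apply ex_RInt_Reals_1. exact pr.
  - reflexivity.
Qed.

Lemma mm01 : Rmin 0 1 = 0 /\ Rmax 0 1 = 1.
Proof. split; [apply Rmin_left | apply Rmax_right]; lra. Qed.

Lemma DR_ext (h h' : R -> R) : (forall u, 0 < u < 1 -> h u = h' u) ->
  Defs.RInt h 0 1 = Defs.RInt h' 0 1.
Proof.
  intro E. destruct mm01 as [m1 m2].
  assert (E' : forall x, Rmin 0 1 < x < Rmax 0 1 -> h x = h' x).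
  { intros x Hx. rewrite m1, m2 in Hx. auto. }
  destruct (classic (ex_RInt h 0 1)) as [H|H].
  - rewrite !DR_int; auto. apply RInt_ext_R; auto. apply ex_RInt_ext_R with h; auto.
  - rewrite !DR_nonint; auto. intro H'. apply H. apply ex_RInt_ext_R with h'; auto.
    intros x Hx; symmetry; auto.
Qed.

Lemma DR_scal (h : R -> R) c : Defs.RInt (fun u => h u * c) 0 1 = Defs.RInt h 0 1 * c.
Proof.
  destruct (Req_dec c 0) as [Hc|Hc].
  - subst c. rewrite Rmult_0_r.
    assert (E : ex_RInt (fun u => h u * 0) 0 1).
    { apply (ex_RInt_ext_R (fun _ => 0)). intros; ring. apply ex_RInt_const_R. }
    rewrite DR_int; auto.
    rewrite (RInt_ext_R _ (fun _ => 0)). 2: { intros x _; ring. }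
    rewrite RInt_const_R. ring.
  - destruct (classic (ex_RInt h 0 1)) as [H|H].
    + assert (H2 : ex_RInt (fun u => h u * c) 0 1).
      { apply ex_RInt_ext_R with (fun y => c * (h y)). intros; ring.
        apply ex_RInt_scal_R; auto. }
      rewrite !DR_int; auto.
      rewrite (RInt_ext_R _ (fun y => c * (h y))). 2: intros; ring.
      rewrite RInt_scal_R; auto. ring.
    + rewrite (DR_nonint h); auto. rewrite DR_nonint. ring.
      intro H2. apply H. apply ex_RInt_ext_R with (fun y => (/c) * (h y * c)).
      intros; field; auto.
      apply ex_RInt_scal_R; auto.
Qed.

Lemma DR_nonneg (h : R -> R) : (forall u, 0 < u < 1 -> 0 <= h u) -> 0 <= Defs.RInt h 0 1.
Proof.
  intro P. destruct (classic (ex_RInt h 0 1)) as [H|H].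
  - rewrite DR_int; auto. apply RInt_ge_0; auto; lra.
  - rewrite DR_nonint; auto; lra.
Qed.

Lemma upd_eq z k u : upd z k u k = u.
Proof. unfold upd. rewrite Nat.eqb_refl. reflexivity. Qed.
Lemma upd_neq z k u i : i <> k -> upd z k u i = z i.
Proof. intro H. unfold upd. destruct (Nat.eqb_spec i k); [contradiction|reflexivity]. Qed.

Definition all01 (z : nat -> R) := forall i, in01 (z i).

Lemma all01_upd z k u : all01 z -> in01 u -> all01 (upd z k u).
Proof. intros H Hu i. unfold upd. destruct (i =? k)%nat; auto. Qed.

Lemma iint_pull sel k F c env :
  (forall z i u, (i < k)%nat -> sel i = true -> c (upd z i u) = c z) ->
  iint sel k (fun z => F z * c z) env = iint sel k F env * c env.
Proof.
  revert env. induction k as [|k IH]; intros env Hc; cbn [iint]; auto.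
  destruct (sel k) eqn:Hs.
  - rewrite <- DR_scal. f_equal. apply functional_extensionality. intro u.
    rewrite IH. rewrite Hc; auto. intros; apply Hc; auto.
  - apply IH. intros; apply Hc; auto.
Qed.

Lemma iint_sel_ext sel sel' k F env : (forall i, (i < k)%nat -> sel i = sel' i) ->
  iint sel k F env = iint sel' k F env.
Proof.
  revert env. induction k as [|k IH]; intros env H; cbn [iint]; auto.
  rewrite <- (H k) by lia. destruct (sel k).
  - f_equal. apply functional_extensionality. intro u. apply IH. intros; apply H; lia.
  - apply IH. intros; apply H; lia.
Qed.

Lemma iint_ext sel k F F' env : (forall z, all01 z -> F z = F' z) -> all01 env ->
  iint sel k F env = iint sel k F' env.
Proof.
  revert env. induction k as [|k IH]; intros env H He; cbn [iint]; auto.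
  destruct (sel k).
  - apply DR_ext. intros u Hu. apply IH; auto. apply all01_upd; auto. unfold in01; lra.
  - apply IH; auto.
Qed.

Lemma iint_nonneg sel k F env : (forall z, all01 z -> 0 <= F z) -> all01 env ->
  0 <= iint sel k F env.
Proof.
  revert env. induction k as [|k IH]; intros env H He; cbn [iint]; auto.
  destruct (sel k).
  - apply DR_nonneg. intros u Hu. apply IH; auto. apply all01_upd; auto. unfold in01; lra.
  - apply IH; auto.
Qed.

Lemma DR_one : Defs.RInt (fun _ => 1) 0 1 = 1.
Proof. rewrite DR_int by apply ex_RInt_const_R. rewrite RInt_const_R. ring. Qed.

Lemma iint_indep sel k F env :
  (forall z i u, (i < k)%nat -> sel i = true -> F (upd z i u) = F z) ->
  iint sel k F env = F env.
Proof.
  intro H. replace F with (fun z => (fun _ => 1) z * F z).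
  2: { apply functional_extensionality; intro; ring. }
  rewrite iint_pull; auto.
  assert (E : forall m env, iint sel m (fun _ => 1) env = 1).
  { clear H. intro m. induction m as [|m IH]; intro env'; cbn [iint]; auto.
    destruct (sel m); auto. transitivity (Defs.RInt (fun _ => 1) 0 1); [|apply DR_one]. f_equal. apply functional_extensionality; intro; auto. }
  rewrite E. ring.
Qed.

Module M34.
Import Defs.

Definition clamp (x : R) : R := Rmax 0 (Rmin 1 x).

Definition Kern (f g : nat -> R -> R) (e : nat) (u w : R) : R :=
  if Nat.even e then ind u w * f (Nat.div2 e) (clamp (w - u))
  else ind w u * g (Nat.div2 e) (clamp (u - w)).

Definition Ib (s : nat) (t : R) (b : bool) (k : nat) (w : R) : R :=
  if (b && Nat.eqb k (posX s))%bool then ind w t else 1.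

Fixpoint mk (f g : nat -> R -> R) (s : nat) (t : R) (b : bool) (k : nat) (w : R) : R :=
  match k with
  | O => Ib s t b 0 w
  | S k' => Defs.RInt (fun u => mk f g s t b k' u * Kern f g k' u w) 0 1 * Ib s t b (S k') w
  end.

Definition J (s : nat) (t : R) (b : bool) (k : nat) (z : nat -> R) : R :=
  if (b && Nat.leb (posX s) k)%bool then ind (z (posX s)) t else 1.

Lemma clamp_id x : in01 x -> clamp x = x.
Proof. intros [H1 H2]. unfold clamp. rewrite Rmin_right by lra. rewrite Rmax_right; lra. Qed.

Lemma edge_Kern f g e z : in01 (z e) -> in01 (z (S e)) -> edge f g e z = Kern f g e (z e) (z (S e)).
Proof.
  intros H1 H2. unfold edge, Kern. destruct (Nat.even e); unfold ind.
  - destruct (Rle_dec (z e) (z (S e))); [|ring]. rewrite clamp_id; auto.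
    unfold in01 in *; split; lra.
  - destruct (Rle_dec (z (S e)) (z e)); [|ring]. rewrite clamp_id; auto.
    unfold in01 in *; split; lra.
Qed.

Lemma edge_upd f g e z i u : (i < e)%nat -> edge f g e (upd z i u) = edge f g e z.
Proof. intro H. unfold edge. rewrite !upd_neq by lia. reflexivity. Qed.

Lemma J_S s t b k z : J s t b (S k) z = J s t b k z * Ib s t b (S k) (z (S k)).
Proof.
  unfold J, Ib. destruct b; cbn [andb]; [|ring].
  destruct (Nat.leb_spec (posX s) (S k)); destruct (Nat.leb_spec (posX s) k);
  destruct (Nat.eqb_spec (S k) (posX s)); try lia; try ring.
  rewrite e. ring.
Qed.

Lemma J_upd s t b k z i u : (k < i)%nat -> J s t b k (upd z i u) = J s t b k z.
Proof.
  intro H. unfold J. destruct b; cbn [andb]; auto.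
  destruct (Nat.leb_spec (posX s) k); auto. rewrite upd_neq by lia. auto.
Qed.

Definition allT : nat -> bool := fun _ => true.

Lemma msg f g s t b : forall k env, all01 env ->
  iint allT k (fun z => W f g k z * J s t b k z) env = mk f g s t b k (env k).
Proof.
  induction k as [|k IH]; intros env He.
  - cbn [iint W mk]. unfold J, Ib. destruct b; cbn [andb]; [|ring].
    destruct (Nat.leb_spec (posX s) 0); destruct (Nat.eqb_spec 0 (posX s)); try lia; try ring.
    rewrite <- e. ring.
  - cbn [iint mk]. unfold allT at 1.
    rewrite <- DR_scal. apply DR_ext. intros u Hu.
    assert (Hu' : in01 u) by (unfold in01; lra).
    transitivity (iint allT k (fun z => (W f g k z * J s t b k z) *
                    (edge f g k z * Ib s t b (S k) (z (S k)))) (upd env k u)).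
    { f_equal. apply functional_extensionality. intro z. cbn [W]. rewrite J_S. ring. }
    rewrite iint_pull.
    2: { intros z i v Hi _. rewrite edge_upd by lia. rewrite upd_neq by lia. reflexivity. }
    rewrite IH by (apply all01_upd; auto). rewrite upd_eq.
    rewrite edge_Kern; rewrite ?upd_eq, ?upd_neq by lia; auto. ring.
Qed.

Fixpoint Wr (f g : nat -> R -> R) (a d : nat) (z : nat -> R) : R :=
  match d with O => 1 | S d' => Wr f g a d' z * edge f g (a + d') z end.

Lemma W_split f g a d z : W f g (a + d) z = W f g a z * Wr f g a d z.
Proof.
  induction d as [|d IH]; cbn [Wr].
  - rewrite Nat.add_0_r. ring.
  - rewrite Nat.add_succ_r. cbn [W]. rewrite IH. ring.
Qed.

Lemma Wr_upd f g a d z i u : (i < a)%nat -> Wr f g a d (upd z i u) = Wr f g a d z.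
Proof.
  intro H. induction d as [|d IH]; cbn [Wr]; auto. rewrite IH, edge_upd by lia. auto.
Qed.

Definition selj (j : nat) : nat -> bool := fun i => negb (Nat.eqb i j).

Lemma outer (j : nat) (A B : (nat -> R) -> R) (a : R -> R) :
  (forall env, all01 env -> iint allT j A env = a (env j)) ->
  (forall z i u, (i < j)%nat -> B (upd z i u) = B z) ->
  forall d env, all01 env ->
  iint (selj j) (S j + d) (fun z => A z * B z) env = iint (selj j) (S j + d) B env * a (env j).
Proof.
  intros HA HB d. induction d as [|d IH]; intros env He.
  - rewrite Nat.add_0_r. cbn [iint].
    assert (Hj : selj j j = false) by (unfold selj; rewrite Nat.eqb_refl; auto). rewrite !Hj.
    rewrite (iint_sel_ext (selj j) allT).
    2: { intros i Hi. unfold selj, allT. destruct (Nat.eqb_spec i j); auto; lia. }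
    rewrite (iint_sel_ext (selj j) allT j B).
    2: { intros i Hi. unfold selj, allT. destruct (Nat.eqb_spec i j); auto; lia. }
    rewrite iint_pull by (intros; auto). rewrite HA by auto.
    rewrite (iint_indep allT j B) by (intros; auto). ring.
  - rewrite Nat.add_succ_r. cbn [iint].
    assert (Hs : selj j (S j + d) = true).
    { unfold selj. destruct (Nat.eqb_spec (S j + d) j); auto; lia. }
    rewrite Hs. rewrite <- DR_scal. apply DR_ext. intros u Hu.
    rewrite IH by (apply all01_upd; auto; unfold in01; lra).
    rewrite upd_neq by lia. reflexivity.
Qed.

Definition Rr n f g j v := iint (selj j) (2 * n + 1) (Wr f g j (2 * n - j)) (fun _ => v).

Lemma cond_fact n f g s t j v : (posX s <= j)%nat -> (j <= 2 * n)%nat -> in01 v ->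
  condNum n f g s j v t = Rr n f g j v * mk f g s t true j v /\
  condDen n f g j v = Rr n f g j v * mk f g s t false j v.
Proof.
  intros H1 H2 Hv. unfold condNum, condDen, Rr.
  change (fun i => negb (Nat.eqb i j)) with (selj j).
  replace (2 * n + 1)%nat with (S j + (2 * n - j))%nat by lia.
  assert (Hc : all01 (fun _ => v)) by (intro; auto).
  split.
  - transitivity (iint (selj j) (S j + (2 * n - j))
       (fun z => (W f g j z * J s t true j z) * Wr f g j (2 * n - j) z) (fun _ => v)).
    { f_equal. apply functional_extensionality; intro z.
      replace (2 * n)%nat with (j + (2 * n - j))%nat at 1 by lia. rewrite W_split.
      unfold J. cbn [andb]. destruct (Nat.leb_spec (posX s) j); try lia. ring. }
    rewrite (outer j _ _ (mk f g s t true j)); auto.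
    + intros env He. apply msg; auto.
    + intros; apply Wr_upd; auto.
  - transitivity (iint (selj j) (S j + (2 * n - j))
       (fun z => (W f g j z * J s t false j z) * Wr f g j (2 * n - j) z) (fun _ => v)).
    { f_equal. apply functional_extensionality; intro z.
      replace (2 * n)%nat with (j + (2 * n - j))%nat at 1 by lia. rewrite W_split.
      unfold J. cbn [andb]. ring. }
    rewrite (outer j _ _ (mk f g s t false j)); auto.
    + intros env He. apply msg; auto.
    + intros; apply Wr_upd; auto.
Qed.

Lemma trunc_fact f g m s t : (posX s <= m)%nat ->
  truncCDF f g m s t = Defs.RInt (mk f g s t true m) 0 1 / Defs.RInt (mk f g s t false m) 0 1.
Proof.
  intro H. unfold truncCDF. replace (m + 1)%nat with (S m) by lia. cbn [iint].
  assert (Hc : all01 (fun _ => 0)) by (intro; unfold in01; lra).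
  f_equal; apply DR_ext; intros u Hu;
  (assert (Hu' : all01 (upd (fun _ => 0) m u)) by (apply all01_upd; auto; unfold in01; lra)).
  - rewrite <- (upd_eq (fun _ => 0) m u) at 2. rewrite <- msg by auto.
    f_equal. apply functional_extensionality; intro z. unfold J; cbn [andb].
    destruct (Nat.leb_spec (posX s) m); try lia. reflexivity.
  - rewrite <- (upd_eq (fun _ => 0) m u) at 2. rewrite <- msg by auto.
    f_equal. apply functional_extensionality; intro z. unfold J; cbn [andb]. ring.
Qed.

End M34.
Import M34.

Lemma RInt_lin (p q : R -> R) (c1 c2 : R) :
  ex_RInt p 0 1 -> ex_RInt q 0 1 ->
  ex_RInt (fun u => c1 * p u - c2 * q u) 0 1 /\
  RInt (fun u => c1 * p u - c2 * q u) 0 1 = c1 * RInt p 0 1 - c2 * RInt q 0 1.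
Proof.
  intros Hp Hq. split.
  - apply ex_RInt_minus_R; apply ex_RInt_scal_R; auto.
  - rewrite RInt_minus_R by (apply ex_RInt_scal_R; auto). rewrite !RInt_scal_R; auto.
Qed.

Lemma crossing (bt a h1 h2 : R -> R) :
  (forall u, in01 u -> 0 <= bt u <= a u) ->
  (forall u u', in01 u -> in01 u' -> u <= u' -> bt u' * a u <= bt u * a u') ->
  (forall u, in01 u -> 0 <= h1 u /\ 0 <= h2 u) ->
  (forall u u', in01 u -> in01 u' -> u' <= u -> h2 u' * h1 u <= h1 u' * h2 u) ->
  ex_RInt (fun u => bt u * h1 u) 0 1 -> ex_RInt (fun u => bt u * h2 u) 0 1 ->
  ex_RInt (fun u => a u * h1 u) 0 1 -> ex_RInt (fun u => a u * h2 u) 0 1 ->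
  RInt (fun u => bt u * h2 u) 0 1 * RInt (fun u => a u * h1 u) 0 1 <=
  RInt (fun u => bt u * h1 u) 0 1 * RInt (fun u => a u * h2 u) 0 1.
Proof.
  intros Hat Hmon Hh Htp I1 I2 I3 I4.
  set (Z1 := RInt (fun u => a u * h1 u) 0 1).
  set (Z2 := RInt (fun u => a u * h2 u) 0 1).
  assert (HZ1 : 0 <= Z1).
  { apply RInt_ge_0; auto; try lra. intros x Hx.
    assert (in01 x) by (unfold in01; lra). destruct (Hat x); auto; destruct (Hh x); auto.
    apply Rmult_le_pos; lra. }
  assert (HZ2 : 0 <= Z2).
  { apply RInt_ge_0; auto; try lra. intros x Hx.
    assert (in01 x) by (unfold in01; lra). destruct (Hat x); auto; destruct (Hh x); auto.
    apply Rmult_le_pos; lra. }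
  set (D := fun u => h2 u * Z1 - h1 u * Z2).
  assert (SC : forall u' u, in01 u' -> in01 u -> u' <= u -> 0 < D u' -> 0 <= D u).
  { intros u' u H' H Hle HD. unfold D in *.
    destruct (Hh u') as [A1 A2]; auto. destruct (Hh u) as [B1 B2]; auto.
    pose proof (Htp u u' H H' Hle) as T.
    assert (P2 : 0 < h2 u').
    { destruct (Rle_lt_or_eq_dec 0 (h2 u')) as [?|E]; auto.
      rewrite <- E in HD. nra. }
    assert (K : h2 u' * (h2 u * Z1 - h1 u * Z2) >= 0) by nra.
    destruct (Rle_or_lt 0 (h2 u * Z1 - h1 u * Z2)); auto. nra. }
  assert (Hlam : exists lam, 0 <= lam /\
            forall u, in01 u -> bt u * D u <= lam * (a u * D u)).
  { set (E := fun x => exists u, in01 u /\ 0 < a u /\ 0 < D u /\ x = bt u / a u).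
    destruct (classic (exists x, E x)) as [Ex|NE].
    - assert (Hb : bound E).
      { exists 1. intros x [u [Hu [Ha [HD ->]]]]. destruct (Hat u Hu).
        apply Rmult_le_reg_r with (a u); auto. unfold Rdiv. rewrite Rmult_assoc, Rinv_l; lra. }
      destruct (completeness E Hb Ex) as [m [Hub Hlub]].
      destruct Ex as [x0 Hx0].
      assert (Hx0' : 0 <= x0).
      { destruct Hx0 as [u [Hu [Ha [HD ->]]]]. destruct (Hat u Hu).
        apply Rmult_le_reg_r with (a u); auto. unfold Rdiv. rewrite Rmult_assoc, Rinv_l; lra. }
      exists m. split. { apply Rle_trans with x0; auto. }
      intros u Hu. destruct (Hat u Hu) as [A1 A2].
      destruct (Rle_lt_or_eq_dec 0 (a u)) as [Hap|Ha0]; [lra| |].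
      + destruct (Rtotal_order (D u) 0) as [Dn|[D0|Dp]].
        * assert (Hm : m <= bt u / a u).
          { apply Hlub. intros x [u' [Hu' [Ha' [HD' ->]]]].
            assert (Hlt : u < u').
            { destruct (Rlt_or_le u u'); auto.
              pose proof (SC u' u Hu' Hu H HD'). lra. }
            pose proof (Hmon u u' Hu Hu' (Rlt_le _ _ Hlt)).
            unfold Rdiv. apply Rmult_le_reg_r with (a u' * a u). nra.
            replace (bt u' * / a u' * (a u' * a u)) with (bt u' * a u) by (field; lra).
            replace (bt u * / a u * (a u' * a u)) with (bt u * a u') by (field; lra). lra. }
          assert (m * a u <= bt u).
          { apply Rmult_le_reg_r with (/ a u). apply Rinv_0_lt_compat; auto.
            rewrite Rmult_assoc, Rinv_r by lra. lra. }
          nra.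
        * rewrite D0. lra.
        * assert (Hm : bt u / a u <= m) by (apply Hub; exists u; auto).
          assert (bt u <= m * a u).
          { apply Rmult_le_reg_r with (/ a u). apply Rinv_0_lt_compat; auto.
            rewrite Rmult_assoc, Rinv_r by lra. unfold Rdiv in Hm. lra. }
          nra.
      + rewrite <- Ha0 in *. assert (bt u = 0) by lra. rewrite H. lra.
    - exists 0. split; [lra|]. intros u Hu. destruct (Hat u Hu) as [A1 A2].
      rewrite Rmult_0_l. destruct (Rle_or_lt (D u) 0). nra.
      destruct (Rle_lt_or_eq_dec 0 (a u)) as [Hap|Ha0]; [lra| |].
      + exfalso. apply NE. exists (bt u / a u), u. auto.
      + rewrite <- Ha0 in *. assert (bt u = 0) by lra. rewrite H0. lra. }
  destruct Hlam as [lam [Hl0 Hl]].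
  destruct (RInt_lin _ _ Z1 Z2 I2 I1) as [J1 E1].
  destruct (RInt_lin _ _ Z1 Z2 I4 I3) as [J2 E2].
  assert (J3 : ex_RInt (fun u => lam * (Z1 * (a u * h2 u) - Z2 * (a u * h1 u))) 0 1)
    by (apply ex_RInt_scal_R; auto).
  assert (Hle : RInt (fun u => Z1 * (bt u * h2 u) - Z2 * (bt u * h1 u)) 0 1 <=
                RInt (fun u => lam * (Z1 * (a u * h2 u) - Z2 * (a u * h1 u))) 0 1).
  { apply RInt_le; auto; try lra. intros x Hx.
    assert (Hx' : in01 x) by (unfold in01; lra). pose proof (Hl x Hx'). unfold D in H. nra. }
  rewrite E1 in Hle. rewrite RInt_scal_R in Hle by auto. rewrite E2 in Hle.
  fold Z1 Z2 in Hle. nra.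
Qed.

Ltac dest_rle := repeat match goal with
  | |- context [Rle_dec ?a ?b] => destruct (Rle_dec a b)
  | H : context [Rle_dec ?a ?b] |- _ => destruct (Rle_dec a b) end.

Lemma clamp_lip x y : Rabs (clamp x - clamp y) <= Rabs (x - y).
Proof. unfold clamp, Rmax, Rmin. repeat destruct Rle_dec; unfold Rabs; repeat destruct Rcase_abs; lra. Qed.

Lemma clamp_01 x : 0 <= clamp x <= 1.
Proof. unfold clamp, Rmax, Rmin. repeat destruct Rle_dec; lra. Qed.

Lemma clamp_mono x y : x <= y -> clamp x <= clamp y.
Proof. unfold clamp, Rmax, Rmin. repeat destruct Rle_dec; lra. Qed.

Lemma ab_ext (f g : R -> R) a b : a <= b -> (forall x, a < x < b -> f x = g x) ->
  ex_RInt f a b -> ex_RInt g a b /\ RInt g a b = RInt f a b.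
Proof.
  intros Hab E H.
  assert (E' : forall x, Rmin a b < x < Rmax a b -> f x = g x).
  { rewrite Rmin_left, Rmax_right by auto. auto. }
  split. apply ex_RInt_ext_R with f; auto. symmetry; apply RInt_ext_R; auto.
Qed.

Lemma cont_ex (phi : R -> R) a b : (forall x, continuous phi x) -> ex_RInt phi a b.
Proof. intro H. apply (ex_RInt_continuous phi a b). intros; auto. Qed.

Lemma EQ (phi : R -> R) p q : (forall x, continuous phi x) ->
  ex_RInt (fun u => phi u * Defs.ind p u * Defs.ind u q) 0 1 /\
  RInt (fun u => phi u * Defs.ind p u * Defs.ind u q) 0 1 = RInt phi (clamp p) (clamp (Rmax p q)).
Proof.
  intro Hc. set (P := clamp p). set (Q := clamp (Rmax p q)).
  assert (HP := clamp_01 p). assert (HQ := clamp_01 (Rmax p q)).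
  assert (HPQ : P <= Q) by (apply clamp_mono; apply Rmax_l).
  fold P Q in HP, HQ.
  set (F := fun u => phi u * Defs.ind p u * Defs.ind u q).
  assert (A1 : ex_RInt F 0 P /\ RInt F 0 P = 0).
  { destruct (ab_ext (fun _ => 0) F 0 P) as [X Y]; try lra.
    - intros x Hx. unfold F, Defs.ind. destruct (Rle_dec p x); [|ring].
      exfalso. unfold P, clamp, Rmax, Rmin in Hx. dest_rle; lra.
    - apply ex_RInt_const_R.
    - split; auto. rewrite Y, RInt_const_R. apply Rmult_0_r. }
  assert (A2 : ex_RInt F P Q /\ RInt F P Q = RInt phi P Q).
  { destruct (ab_ext phi F P Q) as [X Y]; auto.
    - intros x Hx. unfold F, Defs.ind. destruct (Rle_dec p x); destruct (Rle_dec x q); try ring;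
      exfalso; unfold P, Q, clamp, Rmax, Rmin in Hx; dest_rle; lra.
    - apply cont_ex; auto. }
  assert (A3 : ex_RInt F Q 1 /\ RInt F Q 1 = 0).
  { destruct (ab_ext (fun _ => 0) F Q 1) as [X Y]; try lra.
    - intros x Hx. unfold F, Defs.ind. destruct (Rle_dec x q); [|ring].
      exfalso. unfold Q, clamp, Rmax, Rmin in Hx. dest_rle; lra.
    - apply ex_RInt_const_R.
    - split; auto. rewrite Y, RInt_const_R. apply Rmult_0_r. }
  destruct A1 as [X1 Y1]; destruct A2 as [X2 Y2]; destruct A3 as [X3 Y3].
  assert (X12 : ex_RInt F 0 Q) by (apply ex_RInt_Chasles_R with P; auto).
  split.
  - apply ex_RInt_Chasles_R with Q; auto.
  - rewrite <- (RInt_Chasles_R F 0 Q 1); auto. rewrite <- (RInt_Chasles_R F 0 P Q); auto.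
    rewrite Y1, Y2, Y3. fold P Q. rewrite Rplus_0_l, Rplus_0_r. reflexivity.
Qed.

Lemma cont_eps (h : R->R) x0 : (forall eps, 0<eps -> exists d, 0<d /\ forall y, Rabs (y - x0) < d -> Rabs (h y - h x0) < eps) -> continuous h x0.
Proof.
  intro H. unfold continuous. apply filterlim_locally. intro eps.
  destruct (H eps (cond_pos eps)) as [d [Hd Hy]]. exists (mkposreal d Hd). intros y Hb. apply Hy. exact Hb.
Qed.
Lemma eps_cont (h : R->R) x0 : continuous h x0 -> forall eps, 0<eps -> exists d, 0<d /\ forall y, Rabs (y - x0) < d -> Rabs (h y - h x0) < eps.
Proof.
  intros H eps He. unfold continuous in H. apply filterlim_locally with (eps := mkposreal eps He) in H.
  destruct H as [d Hd]. exists d. split. apply cond_pos. intros y Hy. apply Hd. exact Hy.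
Qed.

Lemma cont_conv (w : R) (c k : R -> R) x : continuous c x -> (forall y, continuous k y) -> continuous (fun u => c u * k (w - u)) x.
Proof. intros. apply (continuous_mult c (fun u => k (w - u))); auto.
apply (continuous_comp (fun u => w - u) k). apply (continuous_minus (fun _ => w) (fun u => u)). apply continuous_const. apply continuous_id. auto. Qed.

Lemma bound_ab (c : R -> R) a b : (forall x, continuous c x) -> exists M, 0 <= M /\ forall u, a <= u <= b -> Rabs (c u) <= M.
Proof.
  intro Hc. destruct (Rle_or_lt a b) as [Hab|Hab].
  - destruct (continuity_ab_maj (fun u => Rabs (c u)) a b Hab) as [Mx [HM _]].
    + intros x _. change (fun u => Rabs (c u)) with (comp Rabs c). apply continuity_pt_comp.
      apply continuity_pt_filterlim. apply Hc. apply Rcontinuity_abs.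
    + exists (Rabs (c Mx)). split. apply Rabs_pos. auto.
  - exists 0. split. lra. intros; lra.
Qed.

Lemma unif (k : R -> R) a b : (forall x, continuous k x) -> forall eps, 0 < eps ->
  exists d, 0 < d /\ forall x y, a <= x <= b -> a <= y <= b -> Rabs (y - x) < d -> Rabs (k y - k x) < eps.
Proof.
  intros Hk eps He. destruct (unifcont_1d k a b (fun x _ => Hk x) (mkposreal eps He)) as [d Hd].
  exists d. split. apply cond_pos. intros x y Hx Hy Hxy.
  apply NNPP. intro N. apply (Hd x y Hx Hy Hxy). intro B. apply N. exact B.
Qed.

Lemma CL (c k al be : R -> R) :
  (forall x, continuous c x) -> (forall x, continuous k x) ->
  (forall x, continuous al x) -> (forall x, continuous be x) ->
  (forall w, 0 <= al w /\ al w <= be w /\ be w <= 1) ->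
  forall w0, continuous (fun w => RInt (fun u => c u * k (w - u)) (al w) (be w)) w0.
Proof.
  intros Hc Hk Ha Hb Hab w0. apply cont_eps. intros eps He.
  destruct (bound_ab c 0 1 Hc) as [Mc [HMc HcM]].
  set (eps1 := eps / (2 * (Mc + 1))).
  assert (He1 : 0 < eps1) by (unfold eps1; apply Rdiv_lt_0_compat; lra).
  destruct (unif k (w0 - 2) (w0 + 2) Hk eps1 He1) as [d1 [Hd1 Hu]].
  set (Psi := fun x => (RInt (fun u => c u * k (w0 - u)) 0 x : R)).
  assert (Hex : forall w a b, ex_RInt (fun u => c u * k (w - u)) a b).
  { intros. apply cont_ex. intro x. apply cont_conv; auto. }
  assert (HPsi : forall x, continuous Psi x).
  { intro x. apply (continuous_RInt_1 (fun u => c u * k (w0 - u)) 0 x Psi).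
    apply filter_forall. intro z. unfold Psi. apply (RInt_correct (fun u => c u * k (w0 - u)) 0 z). apply Hex. }
  set (T := fun w => Psi (be w) - Psi (al w)).
  assert (HT : continuous T w0).
  { apply (continuous_minus (fun w => Psi (be w)) (fun w => Psi (al w))).
    apply (continuous_comp be Psi); auto. apply (continuous_comp al Psi); auto. }
  destruct (eps_cont T w0 HT (eps / 2)) as [d2 [Hd2 HT2]]; [lra|].
  exists (Rmin d1 (Rmin d2 1)). split.
  { apply Rmin_pos; auto. apply Rmin_pos; lra. }
  intros y Hy.
  assert (Hy1 : Rabs (y - w0) < d1) by (eapply Rlt_le_trans; [exact Hy| apply Rmin_l]).
  assert (Hy2 : Rabs (y - w0) < d2).
  { eapply Rlt_le_trans; [exact Hy|]. eapply Rle_trans; [apply Rmin_r | apply Rmin_l]. }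
  assert (Hy3 : Rabs (y - w0) < 1).
  { eapply Rlt_le_trans; [exact Hy|]. eapply Rle_trans; [apply Rmin_r | apply Rmin_r]. }
  assert (Chas : forall a b, @eq R (RInt (fun u => c u * k (w0 - u)) a b) (Psi b - Psi a)).
  { intros a b. unfold Psi. rewrite <- (RInt_Chasles_R _ 0 a b) by apply Hex. lra. }
  destruct (Hab y) as [A1 [A2 A3]]. destruct (Hab w0) as [B1 [B2 B3]].
  set (a := al y). set (b := be y).
  assert (Dif : @eq R (RInt (fun u => c u * k (y - u)) a b)
                (RInt (fun u => c u * k (y - u) - c u * k (w0 - u)) a b + (Psi b - Psi a))).
  { rewrite RInt_minus_R by apply Hex. rewrite Chas. lra. }
  assert (Bd : Rabs (RInt (fun u => c u * k (y - u) - c u * k (w0 - u)) a b) <= (b - a) * (Mc * eps1)).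
  { apply abs_RInt_le_const. unfold a, b; lra. apply ex_RInt_minus_R; apply Hex.
    intros u Hu0. replace (c u * k (y - u) - c u * k (w0 - u)) with (c u * (k (y - u) - k (w0 - u))) by ring.
    rewrite Rabs_mult. apply Rmult_le_compat; try apply Rabs_pos.
    apply HcM. unfold a, b in Hu0; lra.
    apply Rlt_le. apply Hu. 
    split; unfold a, b in Hu0; lra.
    apply Rabs_def2 in Hy3. split; unfold a, b in Hu0; lra.
    replace (y - u - (w0 - u)) with (y - w0) by ring. auto. }
  assert (HM : Mc * eps1 <= eps / 2).
  { unfold eps1. replace (Mc * (eps / (2 * (Mc + 1)))) with ((eps / 2) * (Mc / (Mc + 1))) by (field; lra).
    assert (Mc / (Mc + 1) <= 1).
    { apply Rmult_le_reg_r with (Mc + 1); [lra|]. unfold Rdiv. rewrite Rmult_assoc, Rinv_l; lra. }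
    assert (0 <= Mc / (Mc + 1)) by (apply Rdiv_le_0_compat; lra). nra. }
  cbv beta. rewrite Dif. fold a b. rewrite (Chas (al w0) (be w0)).
  pose proof (HT2 y Hy2) as HTy. unfold T in HTy. fold a b in HTy.
  assert (Bd2 : (b - a) * (Mc * eps1) <= eps / 2).
  { apply Rle_trans with (1 * (Mc * eps1)). apply Rmult_le_compat_r. nra. unfold a, b; lra. lra. }
  set (I1 := RInt (fun u => c u * k (y - u) - c u * k (w0 - u)) a b) in *.
  replace (I1 + (Psi b - Psi a) - (Psi (be w0) - Psi (al w0))) with
    (I1 + ((Psi b - Psi a) - (Psi (be w0) - Psi (al w0)))) by lra.
  eapply Rle_lt_trans. apply Rabs_triang. lra.
Qed.

Definition Reg (h : R -> R) := exists c q, (forall x, continuous c x) /\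
  forall u, in01 u -> h u = c u * Defs.ind u q.

Definition FC (f : nat -> R -> R) (i : nat) (x : R) := f i (clamp x).

Lemma lip_cont (h : R -> R) : (forall x y, Rabs (h x - h y) <= Rabs (x - y)) -> forall x, continuous h x.
Proof.
  intros L x. apply cont_eps. intros eps He. exists eps. split; auto. intros y Hy.
  eapply Rle_lt_trans; [apply L|auto].
Qed.

Lemma lip_max a x y : Rabs (Rmax a x - Rmax a y) <= Rabs (x - y).
Proof. unfold Rmax. dest_rle; unfold Rabs; repeat destruct Rcase_abs; lra. Qed.
Lemma lip_min a x y : Rabs (Rmin a x - Rmin a y) <= Rabs (x - y).
Proof. unfold Rmin. dest_rle; unfold Rabs; repeat destruct Rcase_abs; lra. Qed.
Lemma lip_max2 a x y : Rabs (Rmax x a - Rmax y a) <= Rabs (x - y).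
Proof. unfold Rmax. dest_rle; unfold Rabs; repeat destruct Rcase_abs; lra. Qed.

Lemma ind_min u q w : Defs.ind u q * Defs.ind u w = Defs.ind u (Rmin q w).
Proof. unfold Defs.ind, Rmin. dest_rle; try ring; lra. Qed.

Lemma ind_one u : in01 u -> Defs.ind (-1) u = 1.
Proof. intros [H1 H2]. unfold Defs.ind. dest_rle; lra. Qed.

Lemma reg_kern (f g : nat -> R -> R) (e : nat) (h : R -> R) :
  (forall x, continuous (FC f (Nat.div2 e)) x) -> (forall x, continuous (FC g (Nat.div2 e)) x) ->
  Reg h ->
  exists G, (forall x, continuous G x) /\ forall w,
    ex_RInt (fun u => h u * Kern f g e u w) 0 1 /\ RInt (fun u => h u * Kern f g e u w) 0 1 = G w.
Proof.
  intros Hf Hg [c [q [Hc Hh]]].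
  destruct mm01 as [m1 m2].
  assert (Gen : forall (k al be p Q : R -> R),
     (forall x, continuous k x) -> (forall x, continuous al x) -> (forall x, continuous be x) ->
     (forall w, 0 <= al w /\ al w <= be w /\ be w <= 1) ->
     (forall w, al w = clamp (p w) /\ be w = clamp (Rmax (p w) (Q w))) ->
     (forall w u, 0 < u < 1 -> h u * Kern f g e u w = c u * k (w - u) * Defs.ind (p w) u * Defs.ind u (Q w)) ->
     exists G, (forall x, continuous G x) /\ forall w,
      ex_RInt (fun u => h u * Kern f g e u w) 0 1 /\ RInt (fun u => h u * Kern f g e u w) 0 1 = G w).
  { intros k al be p Q Hk Hal Hbe H01 Hab Heq.
    exists (fun w => RInt (fun u => c u * k (w - u)) (al w) (be w)). split.
    - intro x. apply CL; auto.
    - intro w. destruct (EQ (fun u => c u * k (w - u)) (p w) (Q w)) as [X Y].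
      { intro x. apply cont_conv; auto. }
      destruct (Hab w) as [-> ->].
      assert (E : forall u, Rmin 0 1 < u < Rmax 0 1 ->
          c u * k (w - u) * Defs.ind (p w) u * Defs.ind u (Q w) = h u * Kern f g e u w).
      { intros u Hu. rewrite m1, m2 in Hu. symmetry. apply Heq; auto. }
      split. apply ex_RInt_ext_R with (2 := X); auto.
      rewrite <- Y. symmetry. apply RInt_ext_R; auto. }
  destruct (Nat.even e) eqn:He.
  - apply (Gen (FC f (Nat.div2 e)) (fun _ => clamp (-1)) (fun w => clamp (Rmax (-1) (Rmin q w)))
               (fun _ => -1) (fun w => Rmin q w)); auto.
    + intros; apply continuous_const.
    + apply lip_cont. intros x y. eapply Rle_trans. apply clamp_lip.
      eapply Rle_trans. apply lip_max. apply lip_min.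
    + intro w. pose proof (clamp_01 (-1)). pose proof (clamp_01 (Rmax (-1) (Rmin q w))).
      pose proof (clamp_mono (-1) (Rmax (-1) (Rmin q w)) (Rmax_l _ _)). lra.
    + intros w u Hu. unfold Kern. rewrite He. rewrite (Hh u) by (unfold in01; lra).
      rewrite ind_one by (unfold in01; lra). unfold FC.
      rewrite <- ind_min. ring.
  - apply (Gen (fun x => FC g (Nat.div2 e) (- x)) (fun w => clamp w) (fun w => clamp (Rmax w q))
               (fun w => w) (fun _ => q)); auto.
    + intro x. apply (continuous_comp (fun x => - x) (FC g (Nat.div2 e))); auto.
      apply lip_cont. intros a b. replace (-a - -b) with (-(a-b)) by ring. rewrite Rabs_Ropp. lra.
    + apply lip_cont. intros; apply clamp_lip.
    + apply lip_cont. intros x y. eapply Rle_trans. apply clamp_lip. apply lip_max2.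
    + intro w. pose proof (clamp_01 w). pose proof (clamp_01 (Rmax w q)).
      pose proof (clamp_mono w (Rmax w q) (Rmax_l _ _)). lra.
    + intros w u Hu. unfold Kern. rewrite He. rewrite (Hh u) by (unfold in01; lra).
      unfold FC. replace (- (w - u)) with (u - w) by ring. ring.
Qed.

Lemma Ib_ind s t b k : exists q, forall u, in01 u -> Ib s t b k u = Defs.ind u q.
Proof.
  unfold Ib. destruct (b && Nat.eqb k (posX s))%bool.
  - exists t. auto.
  - exists 2. intros u [H1 H2]. unfold Defs.ind. dest_rle; lra.
Qed.

Lemma mk_reg f g s t b n :
  (forall i, (i < n)%nat -> (forall x, continuous (FC f i) x) /\ (forall x, continuous (FC g i) x)) ->
  forall k, (k <= 2 * n)%nat -> Reg (mk f g s t b k).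
Proof.
  intros HC k. induction k as [|k IH]; intro Hk.
  - destruct (Ib_ind s t b 0) as [q Hq]. exists (fun _ => 1), q. split.
    + intro; apply continuous_const.
    + intros u Hu. cbn [mk]. rewrite Hq; auto. ring.
  - assert (Hd : (Nat.div2 k < n)%nat).
    { pose proof (Nat.div2_decr k). assert (Nat.div2 k <= k)%nat by (apply Nat.div2_decr; lia).
      pose proof (Nat.div2_odd k). destruct (Nat.odd k); simpl Nat.b2n in *; lia. }
    destruct (HC _ Hd) as [H1 H2].
    destruct (reg_kern f g k _ H1 H2 (IH ltac:(lia))) as [G [HG HGw]].
    destruct (Ib_ind s t b (S k)) as [q Hq]. exists G, q. split; auto.
    intros u Hu. cbn [mk]. destruct (HGw u) as [X Y]. rewrite DR_int by auto.
    rewrite Y, Hq; auto.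
Qed.

Lemma reg_int h : Reg h -> ex_RInt h 0 1.
Proof.
  intros [c [q [Hc Hh]]]. destruct (EQ c (-1) q Hc) as [X _].
  apply ex_RInt_ext_R with (2 := X). destruct mm01 as [m1 m2]. rewrite m1, m2.
  intros u Hu. rewrite Hh by (unfold in01; lra). rewrite ind_one by (unfold in01; lra). ring.
Qed.

Lemma C1_lip (h dh : R -> R) x0 : C1_on01 h dh -> in01 x0 ->
  exists d, 0 < d /\ forall y, in01 y -> Rabs (y - x0) < d -> Rabs (h y - h x0) <= (Rabs (dh x0) + 1) * Rabs (y - x0).
Proof.
  intros [H1 _] Hx. destruct (H1 x0 Hx 1 ltac:(lra)) as [d [Hd Hy]].
  exists d. split; auto. intros y Hy01 Hyd.
  destruct (Req_dec y x0) as [E|E].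
  - subst. replace (h x0 - h x0) with 0 by ring. rewrite Rabs_R0. apply Rmult_le_pos; [|apply Rabs_pos].
    pose proof (Rabs_pos (dh x0)); lra.
  - pose proof (Hy y Hy01 E Hyd) as K.
    assert (Hne : y - x0 <> 0) by lra.
    replace (h y - h x0) with (((h y - h x0) / (y - x0) - dh x0 + dh x0) * (y - x0)) by (field; auto).
    rewrite Rabs_mult. apply Rmult_le_compat_r. apply Rabs_pos.
    eapply Rle_trans. apply Rabs_triang. lra.
Qed.

Lemma FC_cont (h dh : R -> R) : C1_on01 h dh -> forall x, continuous (fun x => h (clamp x)) x.
Proof.
  intros HC x. apply cont_eps. intros eps He.
  set (c0 := clamp x). assert (Hc0 : in01 c0) by apply clamp_01.
  destruct (C1_lip h dh c0 HC Hc0) as [d [Hd Hl]].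
  set (B := Rabs (dh c0) + 1). assert (HB : 0 < B) by (unfold B; pose proof (Rabs_pos (dh c0)); lra).
  exists (Rmin d (eps / B)). split. apply Rmin_pos; auto. apply Rdiv_lt_0_compat; auto.
  intros y Hy. pose proof (clamp_lip y x) as L. fold c0 in L.
  assert (Hyd : Rabs (clamp y - c0) < d) by (eapply Rle_lt_trans; [exact L|]; eapply Rlt_le_trans; [exact Hy|apply Rmin_l]).
  pose proof (Hl (clamp y) (clamp_01 y) Hyd) as K. fold B in K.
  assert (Hye : Rabs (y - x) < eps / B) by (eapply Rlt_le_trans; [exact Hy|apply Rmin_r]).
  eapply Rle_lt_trans. exact K.
  apply Rle_lt_trans with (B * Rabs (y - x)). apply Rmult_le_compat_l; lra.
  apply Rmult_lt_reg_l with (/ B). apply Rinv_0_lt_compat; auto.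
  rewrite <- Rmult_assoc, Rinv_l by lra. rewrite Rmult_1_l. unfold Rdiv in Hye. lra.
Qed.

Lemma hc_deriv (h dh : R -> R) x : C1_on01 h dh -> 0 < x < 1 ->
  derivable_pt_lim (fun x => h (clamp x)) x (dh x).
Proof.
  intros [H1 _] Hx eps He. assert (Hx' : in01 x) by (unfold in01; lra).
  destruct (H1 x Hx' eps He) as [d [Hd Hy]].
  assert (Hp : 0 < Rmin d (Rmin x (1 - x))) by (apply Rmin_pos; auto; apply Rmin_pos; lra).
  exists (mkposreal _ Hp). intros k Hk Hkd. simpl in Hkd.
  assert (Hk1 : Rabs k < d) by (eapply Rlt_le_trans; [exact Hkd|apply Rmin_l]).
  assert (Hk2 : Rabs k < Rmin x (1 - x)) by (eapply Rlt_le_trans; [exact Hkd|apply Rmin_r]).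
  assert (Hk3 : Rabs k < x /\ Rabs k < 1 - x).
  { split; eapply Rlt_le_trans; try exact Hk2; [apply Rmin_l|apply Rmin_r]. }
  destruct Hk3 as [Ka Kb]. apply Rabs_def2 in Ka. apply Rabs_def2 in Kb.
  rewrite !clamp_id by (unfold in01; lra).
  replace ((h (x + k) - h x) / k) with ((h (x + k) - h x) / ((x + k) - x)) by (f_equal; ring).
  apply Hy. unfold in01; lra. intro E; apply Hk; lra.
  replace (x + k - x) with k by ring. auto.
Qed.

Lemma lc_ineq (h dh : R -> R) :
  C1_on01 h dh ->
  (forall x, 0 <= x <= 1 -> 0 <= h x) ->
  (forall x, 0 < x <= 1 -> 0 < h x) ->
  (forall a b, 0 < a -> a <= b -> b <= 1 -> dh b / h b <= dh a / h a) ->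
  forall p q1 q2 r, 0 <= p -> p <= q1 -> q1 <= q2 -> q2 <= r -> r <= 1 -> p + r = q1 + q2 ->
  h p * h r <= h q1 * h q2.
Proof.
  intros HC Hnn Hpos Hlc p q1 q2 r H1 H2 H3 H4 H5 Hs.
  destruct (Req_dec p q1) as [E|E].
  { subst. assert (r = q2) by lra. subst. lra. }
  set (hc := fun x => h (clamp x)).
  assert (Hhc : forall x, in01 x -> hc x = h x) by (intros; unfold hc; rewrite clamp_id; auto).
  set (F := fun x => hc x * hc (p + r - x)).
  set (D := fun x => dh x * hc (p + r - x) + hc x * (dh (p + r - x) * -1)).
  set (df := fun x => if Rlt_dec p x then if Rlt_dec x q1 then D x else 0 else 0).
  assert (HD : forall x, p < x < q1 -> is_derive F x (D x)).
  { intros x Hx. apply is_derive_Reals. unfold F, D.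
    apply (derivable_pt_lim_mult hc (fun x => hc (p + r - x))).
    apply hc_deriv; auto; lra.
    apply (derivable_pt_lim_comp (fun x => p + r - x) hc).
    replace (-1) with (0 - 1) by ring.
    apply (derivable_pt_lim_minus (fct_cte (p + r)) id). apply derivable_pt_lim_const. apply derivable_pt_lim_id.
    apply hc_deriv; auto; lra. }
  destruct (MVT_gen F p q1 df) as [xi [Hxi Heq]].
  - rewrite Rmin_left, Rmax_right by lra. intros x Hx. unfold df.
    destruct (Rlt_dec p x); [|lra]. destruct (Rlt_dec x q1); [|lra]. apply HD; lra.
  - intros x _. apply continuity_pt_filterlim. unfold F.
    apply (continuous_mult hc (fun x => hc (p + r - x))). apply FC_cont with dh; auto.
    apply (continuous_comp (fun x => p + r - x) hc). apply (continuous_minus (fun _ => p + r) (fun x => x)).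
    apply continuous_const. apply continuous_id. apply FC_cont with dh; auto.
  - rewrite Rmin_left, Rmax_right in Hxi by lra.
    assert (Hdf : 0 <= df xi).
    { unfold df. destruct (Rlt_dec p xi); [|lra]. destruct (Rlt_dec xi q1); [|lra].
      unfold D. assert (Ix : in01 xi) by (unfold in01; lra).
      assert (Iy : in01 (p + r - xi)) by (unfold in01; lra).
      rewrite !Hhc by auto.
      assert (Px : 0 < h xi) by (apply Hpos; lra).
      assert (Py : 0 < h (p + r - xi)) by (apply Hpos; lra).
      pose proof (Hlc xi (p + r - xi) ltac:(lra) ltac:(lra) ltac:(lra)) as L.
      apply Rmult_le_compat_r with (r := h xi * h (p + r - xi)) in L; [|nra].
      replace (dh (p + r - xi) / h (p + r - xi) * (h xi * h (p + r - xi))) with (dh (p + r - xi) * h xi) in L by (field; lra).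
      replace (dh xi / h xi * (h xi * h (p + r - xi))) with (dh xi * h (p + r - xi)) in L by (field; lra).
      lra. }
    unfold F in Heq. rewrite !Hhc in Heq by (unfold in01; lra).
    replace (p + r - q1) with q2 in Heq by lra. replace (p + r - p) with r in Heq by ring.
    nra.
Qed.

Lemma lc2 h : convex_factor h -> forall p q1 q2 r, 0 <= p -> p <= q1 -> p <= q2 -> q1 <= r -> q2 <= r -> r <= 1 ->
  p + r = q1 + q2 -> h p * h r <= h q1 * h q2.
Proof.
  intros [Hnn [Hmo [_ [Hpos [dh [HC Hlc]]]]]] p q1 q2 r H1 H2 H3 H4 H5 H6 Hs.
  assert (Hnn' : forall x, 0 <= x <= 1 -> 0 <= h x) by (intros; apply Hnn; auto).
  destruct (Rle_or_lt q1 q2).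
  - apply (lc_ineq h dh HC Hnn' Hpos Hlc); lra.
  - rewrite (Rmult_comm (h q1)). apply (lc_ineq h dh HC Hnn' Hpos Hlc); lra.
Qed.

Lemma cf_nn h x : convex_factor h -> in01 x -> 0 <= h x.
Proof. intros [H _] Hx. auto. Qed.
Lemma cf_mono h a b : convex_factor h -> in01 a -> in01 b -> a <= b -> h a <= h b.
Proof. intros [_ [H _]]. auto. Qed.

Section K.
Variables (f g : nat -> R -> R) (e : nat).
Hypothesis Hf : convex_factor (f (Nat.div2 e)).
Hypothesis Hg : convex_factor (g (Nat.div2 e)).

Lemma ind01 a b : 0 <= Defs.ind a b <= 1.
Proof. unfold Defs.ind. destruct Rle_dec; lra. Qed.

Lemma Kern_nn u w : 0 <= Kern f g e u w.
Proof.
  unfold Kern. destruct (Nat.even e); apply Rmult_le_pos; try apply ind01;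
  apply cf_nn; auto; apply clamp_01.
Qed.

Lemma Kern_le u w : Kern f g e u w <= Rmax (f (Nat.div2 e) 1) (g (Nat.div2 e) 1).
Proof.
  unfold Kern. destruct (Nat.even e).
  - apply Rle_trans with (1 * f (Nat.div2 e) 1); [|rewrite Rmult_1_l; apply Rmax_l].
    apply Rmult_le_compat; try apply ind01. apply cf_nn; auto; apply clamp_01.
    apply cf_mono; auto. apply clamp_01. unfold in01; lra. apply clamp_01.
  - apply Rle_trans with (1 * g (Nat.div2 e) 1); [|rewrite Rmult_1_l; apply Rmax_r].
    apply Rmult_le_compat; try apply ind01. apply cf_nn; auto; apply clamp_01.
    apply cf_mono; auto. apply clamp_01. unfold in01; lra. apply clamp_01.
Qed.

Lemma Kern_tp2 u' u w1 w2 : in01 u' -> in01 u -> in01 w1 -> in01 w2 -> u' <= u -> w1 <= w2 ->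
  Kern f g e u' w2 * Kern f g e u w1 <= Kern f g e u' w1 * Kern f g e u w2.
Proof.
  intros [A1 A2] [B1 B2] [C1 C2] [D1 D2] Hu Hw. unfold Kern. destruct (Nat.even e); unfold Defs.ind.
  - destruct (Rle_dec u' w2); destruct (Rle_dec u w1);
      try (rewrite ?Rmult_0_l, ?Rmult_0_r; apply Rmult_le_pos; apply Rmult_le_pos; try apply ind01; apply cf_nn; auto; apply clamp_01).
    destruct (Rle_dec u' w1); [|lra]. destruct (Rle_dec u w2); [|lra].
    rewrite !clamp_id by (unfold in01; lra).
    pose proof (lc2 _ Hf (w1 - u) (w1 - u') (w2 - u) (w2 - u')) as L. nra.
  - destruct (Rle_dec w2 u'); destruct (Rle_dec w1 u);
      try (rewrite ?Rmult_0_l, ?Rmult_0_r; apply Rmult_le_pos; apply Rmult_le_pos; try apply ind01; apply cf_nn; auto; apply clamp_01).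
    destruct (Rle_dec w1 u'); [|lra]. destruct (Rle_dec w2 u); [|lra].
    rewrite !clamp_id by (unfold in01; lra).
    pose proof (lc2 _ Hg (u' - w2) (u' - w1) (u - w2) (u - w1)) as L. nra.
Qed.

Lemma Kern_even_dec u' u y : Nat.even e = true -> in01 u' -> in01 u -> in01 y -> u' <= u ->
  Kern f g e u y <= Kern f g e u' y.
Proof.
  intros He [A1 A2] [B1 B2] [C1 C2] Hu. unfold Kern. rewrite He. unfold Defs.ind.
  destruct (Rle_dec u y).
  - destruct (Rle_dec u' y); [|lra]. rewrite !Rmult_1_l. rewrite !clamp_id by (unfold in01; lra).
    apply cf_mono; auto; unfold in01; lra.
  - rewrite Rmult_0_l. apply Rmult_le_pos; try apply ind01. apply cf_nn; auto; apply clamp_01.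
Qed.

Lemma Kern_odd_inc u' u x : Nat.even e = false -> in01 u' -> in01 u -> in01 x -> u' <= u ->
  Kern f g e u' x <= Kern f g e u x.
Proof.
  intros He [A1 A2] [B1 B2] [C1 C2] Hu. unfold Kern. rewrite He. unfold Defs.ind.
  destruct (Rle_dec x u').
  - destruct (Rle_dec x u); [|lra]. rewrite !Rmult_1_l. rewrite !clamp_id by (unfold in01; lra).
    apply cf_mono; auto; unfold in01; lra.
  - rewrite Rmult_0_l. apply Rmult_le_pos; try apply ind01. apply cf_nn; auto; apply clamp_01.
Qed.
End K.

Section Propag.
Variables (n : nat) (f g : nat -> R -> R) (s : nat) (t : R).
Hypothesis HCF : forall i, (i < n)%nat -> convex_factor (f i) /\ convex_factor (g i).

Lemma HFC : forall i, (i < n)%nat -> (forall x, continuous (FC f i) x) /\ (forall x, continuous (FC g i) x).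
Proof.
  intros i Hi. destruct (HCF i Hi) as [[_ [_ [_ [_ [df [Cf _]]]]]] [_ [_ [_ [_ [dg [Cg _]]]]]]].
  split; intro x; unfold FC; [apply FC_cont with df | apply FC_cont with dg]; auto.
Qed.

Lemma div2_lt k : (k < 2 * n)%nat -> (Nat.div2 k < n)%nat.
Proof.
  intro Hk. pose proof (Nat.div2_odd k). destruct (Nat.odd k); simpl Nat.b2n in *; lia.
Qed.

Notation at_ := (mk f g s t true).
Notation a_ := (mk f g s t false).

Lemma ex_kern b k w : (k < 2 * n)%nat -> ex_RInt (fun u => mk f g s t b k u * Kern f g k u w) 0 1.
Proof.
  intro Hk. pose proof (div2_lt k Hk) as Hd. destruct (HFC _ Hd) as [H1 H2].
  destruct (reg_kern f g k _ H1 H2 (mk_reg f g s t b n HFC k ltac:(lia))) as [G [_ HG]].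
  apply HG.
Qed.

Lemma ex_one b k : (k <= 2 * n)%nat -> ex_RInt (fun u => mk f g s t b k u * 1) 0 1.
Proof.
  intro Hk. apply ex_RInt_ext_R with (mk f g s t b k). intros; ring.
  apply reg_int. apply (mk_reg f g s t b n HFC k Hk).
Qed.

Lemma Ib01 b k w : 0 <= Ib s t b k w <= 1.
Proof. unfold Ib. destruct (b && Nat.eqb k (posX s))%bool. apply ind01. lra. Qed.

Lemma a_nn_le : forall k, (k <= 2 * n)%nat -> forall u, in01 u -> 0 <= at_ k u /\ at_ k u <= a_ k u.
Proof.
  induction k as [|k IH]; intros Hk u Hu.
  - cbn [mk]. replace (Ib s t false 0 u) with 1 by reflexivity. pose proof (Ib01 true 0 u). lra.
  - cbn [mk]. replace (Ib s t false (S k) u) with 1 by reflexivity. rewrite Rmult_1_r.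
    pose proof (div2_lt k ltac:(lia)) as Hd. destruct (HCF _ Hd) as [Cf Cg].
    pose proof (Ib01 true (S k) u) as HI.
    assert (A : 0 <= Defs.RInt (fun v => at_ k v * Kern f g k v u) 0 1).
    { apply DR_nonneg. intros v Hv. destruct (IH ltac:(lia) v ltac:(unfold in01; lra)).
      apply Rmult_le_pos; auto. apply Kern_nn; auto. }
    assert (B : Defs.RInt (fun v => at_ k v * Kern f g k v u) 0 1 <= Defs.RInt (fun v => a_ k v * Kern f g k v u) 0 1).
    { rewrite !DR_int by (apply ex_kern; lia). apply RInt_le; try lra; try (apply ex_kern; lia).
      intros v Hv. destruct (IH ltac:(lia) v ltac:(unfold in01; lra)).
      apply Rmult_le_compat_r; auto. apply Kern_nn; auto. }
    split. apply Rmult_le_pos; lra. nra.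
Qed.

Lemma a_nn k u : (k <= 2 * n)%nat -> in01 u -> 0 <= a_ k u.
Proof. intros. destruct (a_nn_le k H u H0). lra. Qed.

Lemma at_eq_a : forall k, (k < posX s)%nat -> forall w, at_ k w = a_ k w.
Proof.
  induction k as [|k IH]; intros Hk w.
  - cbn [mk]. unfold Ib. destruct (Nat.eqb_spec 0 (posX s)); try lia. reflexivity.
  - cbn [mk]. unfold Ib. destruct (Nat.eqb_spec (S k) (posX s)); try lia. cbn [andb].
    f_equal. f_equal. apply functional_extensionality; intro v. rewrite IH by lia. reflexivity.
Qed.

Lemma at_base w : at_ (posX s) w = a_ (posX s) w * Defs.ind w t.
Proof.
  destruct (posX s) as [|k] eqn:E.
  - cbn [mk]. unfold Ib. rewrite E. cbn. ring.
  - cbn [mk]. unfold Ib. rewrite E, Nat.eqb_refl. cbn [andb].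
    replace (Nat.eqb (S k) (S k)) with true by (symmetry; apply Nat.eqb_refl). cbn [andb]. rewrite Rmult_1_r.
    f_equal. f_equal. apply functional_extensionality; intro v. rewrite at_eq_a by lia. reflexivity.
Qed.

Lemma mono_ratio : forall k, (posX s <= k)%nat -> (k <= 2 * n)%nat ->
  forall u u', in01 u -> in01 u' -> u <= u' -> at_ k u' * a_ k u <= at_ k u * a_ k u'.
Proof.
  intros k H1. induction H1 as [|k H1 IH]; intros H2 u u' Hu Hu' Huu.
  - rewrite !at_base. pose proof (a_nn _ u H2 Hu). pose proof (a_nn _ u' H2 Hu').
    unfold Defs.ind. destruct (Rle_dec u t); destruct (Rle_dec u' t); try lra; nra.
  - cbn [mk]. unfold Ib. destruct (Nat.eqb_spec (S k) (posX s)); try lia. cbn [andb].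
    rewrite !Rmult_1_r.
    pose proof (div2_lt k ltac:(lia)) as Hd. destruct (HCF _ Hd) as [Cf Cg].
    rewrite !DR_int by (apply ex_kern; lia).
    apply (crossing (at_ k) (a_ k) (fun v => Kern f g k v u) (fun v => Kern f g k v u')).
    + intros v Hv. apply a_nn_le; auto; lia.
    + intros v v' Hv Hv' Hvv. apply IH; auto; lia.
    + intros v Hv. split; apply Kern_nn; auto.
    + intros v v' Hv Hv' Hvv. apply Kern_tp2; auto.
    + apply ex_kern; lia.
    + apply ex_kern; lia.
    + apply ex_kern; lia.
    + apply ex_kern; lia.
Qed.
End Propag.

Lemma div_le a b c d : 0 < b -> 0 < d -> a * d <= c * b -> a / b <= c / d.
Proof.
  intros Hb Hd H. apply Rmult_le_reg_r with (b * d). nra.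
  replace (a / b * (b * d)) with (a * d) by (field; lra).
  replace (c / d * (b * d)) with (c * b) by (field; lra). lra.
Qed.

Lemma even2 x : Nat.even (2 * x) = true /\ Nat.even (S (2 * x)) = false.
Proof.
  induction x as [|x IH]; auto. replace (2 * S x)%nat with (S (S (2 * x))) by lia.
  cbn [Nat.even]. destruct IH as [A B]. split; auto.
Qed.

Section Main.
Variables (n : nat) (f g : nat -> R -> R) (s : nat) (t : R).
Hypothesis HCF : forall i, (i < n)%nat -> convex_factor (f i) /\ convex_factor (g i).

Lemma edge_nn e z : (e < 2 * n)%nat -> all01 z -> 0 <= edge f g e z.
Proof.
  intros He Hz. rewrite edge_Kern by auto. destruct (HCF _ (div2_lt n e He)). apply Kern_nn; auto.
Qed.

Lemma Wr_nn j d z : (j + d <= 2 * n)%nat -> all01 z -> 0 <= Wr f g j d z.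
Proof.
  intros H Hz. induction d as [|d IH]; cbn [Wr]. lra.
  apply Rmult_le_pos. apply IH; lia. apply edge_nn; auto; lia.
Qed.

Lemma Rr_nn j v : (j <= 2 * n)%nat -> in01 v -> 0 <= Rr n f g j v.
Proof.
  intros Hj Hv. unfold Rr. apply iint_nonneg. intros z Hz. apply Wr_nn; auto; lia.
  intro; auto.
Qed.

Lemma cond_ratio j v : (posX s <= j)%nat -> (j <= 2 * n)%nat -> in01 v -> 0 < condDen n f g j v ->
  condCDF n f g s j v t = mk f g s t true j v / mk f g s t false j v /\ 0 < mk f g s t false j v.
Proof.
  intros H1 H2 Hv Hd. destruct (cond_fact n f g s t j v H1 H2 Hv) as [E1 E2].
  unfold condCDF. rewrite E1, E2. rewrite E2 in Hd.
  pose proof (Rr_nn j v H2 Hv). pose proof (a_nn n f g s t HCF j v H2 Hv).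
  assert (0 < Rr n f g j v /\ 0 < mk f g s t false j v).
  { destruct (Rle_lt_or_eq_dec _ _ H) as [A|A]; destruct (Rle_lt_or_eq_dec _ _ H0) as [B|B];
    try (rewrite <- A in Hd); try (rewrite <- B in Hd); lra. }
  split; [|tauto]. field. lra.
Qed.

Lemma DR_one_mk b k : (k <= 2 * n)%nat ->
  Defs.RInt (mk f g s t b k) 0 1 = RInt (fun u => mk f g s t b k u * 1) 0 1.
Proof.
  intro Hk. rewrite DR_int. apply RInt_ext_R. intros; ring.
  apply reg_int. apply (mk_reg f g s t b n (HFC n f g HCF) k Hk).
Qed.

Lemma mk_S b m w : (S m <> posX s)%nat ->
  mk f g s t b (S m) w = Defs.RInt (fun u => mk f g s t b m u * Kern f g m u w) 0 1.
Proof.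
  intro H. cbn [mk]. unfold Ib. destruct (Nat.eqb_spec (S m) (posX s)); try lia.
  rewrite Bool.andb_false_r. ring.
Qed.

End Main.

Import Defs.

Theorem mainTheorem6 (n : nat) (f g : nat -> R -> R) (s r : nat) (t : R) :
  (1 <= n)%nat ->
  (forall i, (i < n)%nat -> convex_factor (f i) /\ convex_factor (g i)) ->
  (1 <= s)%nat -> (s <= r)%nat -> in01 t ->
  ((r <= n + 1)%nat ->
     forall x1 x2, in01 x1 -> in01 x2 -> x1 <= x2 ->
       0 < condDen n f g (posX r) x1 -> 0 < condDen n f g (posX r) x2 ->
       condCDF n f g s (posX r) x2 t <= condCDF n f g s (posX r) x1 t) /\
  ((r <= n)%nat ->
     (forall y1 y2, in01 y1 -> in01 y2 -> y1 <= y2 ->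
        0 < condDen n f g (posY r) y1 -> 0 < condDen n f g (posY r) y2 ->
        condCDF n f g s (posY r) y2 t <= condCDF n f g s (posY r) y1 t) /\
     (forall y, in01 y -> 0 < condDen n f g (posY r) y ->
        truncCDF f g (posX r) s t <= condCDF n f g s (posY r) y t) /\
     (forall x, in01 x -> 0 < condDen n f g (posX (r + 1)) x ->
        condCDF n f g s (posX (r + 1)) x t <= truncCDF f g (posY r) s t)).
Proof.
  intros Hn HCF Hs Hsr Ht.
  assert (Mono : forall j x1 x2, (posX s <= j)%nat -> (j <= 2 * n)%nat -> in01 x1 -> in01 x2 -> x1 <= x2 ->
       0 < condDen n f g j x1 -> 0 < condDen n f g j x2 ->
       condCDF n f g s j x2 t <= condCDF n f g s j x1 t).
  { intros j x1 x2 H1 H2 Hx1 Hx2 Hx D1 D2.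
    destruct (cond_ratio n f g s t HCF j x1 H1 H2 Hx1 D1) as [E1 P1].
    destruct (cond_ratio n f g s t HCF j x2 H1 H2 Hx2 D2) as [E2 P2].
    rewrite E1, E2. apply div_le; auto.
    apply (mono_ratio n f g s t HCF j H1 H2 x1 x2 Hx1 Hx2 Hx). }
  split.
  { intros Hr x1 x2 Hx1 Hx2 Hx D1 D2. apply Mono; auto; unfold posX; lia. }
  intro Hr. split; [|split].
  - intros y1 y2 Hy1 Hy2 Hy D1 D2. apply Mono; auto; unfold posX, posY; lia.
  - intros y Hy D.
    set (m := posX r).
    assert (Hm1 : (posX s <= m)%nat) by (unfold m, posX; lia).
    assert (Hm2 : (m < 2 * n)%nat) by (unfold m, posX; lia).
    assert (Hj : posY r = S m) by (unfold m, posX, posY; lia).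
    destruct (cond_ratio n f g s t HCF (posY r) y ltac:(unfold posX, posY; lia) ltac:(unfold posY; lia) Hy D) as [E Pa].
    rewrite E. rewrite trunc_fact by auto. rewrite Hj in *.
    assert (Hne : (S m <> posX s)%nat) by (unfold m, posX in *; lia).
    rewrite (mk_S f g s t true m y Hne), (mk_S f g s t false m y Hne) in *.
    assert (Hev : Nat.even m = true) by (unfold m, posX; apply even2).
    destruct (HCF _ (div2_lt n m Hm2)) as [Cf Cg].
    rewrite (DR_int (fun u => mk f g s t true m u * Kern f g m u y)) by (apply (ex_kern n f g s t HCF); lia).
    rewrite (DR_int (fun u => mk f g s t false m u * Kern f g m u y)) in Pa |- * by (apply (ex_kern n f g s t HCF); lia).
    rewrite (DR_one_mk n f g s t HCF true m), (DR_one_mk n f g s t HCF false m) by lia.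
    set (A := RInt.RInt (fun u => mk f g s t true m u * 1) 0 1).
    set (B := RInt.RInt (fun u => mk f g s t false m u * 1) 0 1).
    set (C := RInt.RInt (fun u => mk f g s t true m u * Kern f g m u y) 0 1).
    set (Dd := RInt.RInt (fun u => mk f g s t false m u * Kern f g m u y) 0 1) in *.
    assert (Cr : A * Dd <= C * B).
    { apply (crossing (mk f g s t true m) (mk f g s t false m) (fun v => Kern f g m v y) (fun _ => 1)).
      - intros v Hv. apply (a_nn_le n f g s t HCF m); auto; lia.
      - intros v v' Hv Hv' Hvv. apply (mono_ratio n f g s t HCF m); auto; lia.
      - intros v Hv. split; [apply Kern_nn; auto | lra].
      - intros v v' Hv Hv' Hvv. rewrite Rmult_1_l, Rmult_1_r. apply Kern_even_dec; auto.
      - apply (ex_kern n f g s t HCF); lia.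
      - apply (ex_one n f g s t HCF); lia.
      - apply (ex_kern n f g s t HCF); lia.
      - apply (ex_one n f g s t HCF); lia. }
    assert (HA : 0 <= A /\ A <= B).
    { split; [apply RInt_ge_0 | apply RInt_le]; try lra; try (apply (ex_one n f g s t HCF); lia);
      intros v Hv; destruct (a_nn_le n f g s t HCF m ltac:(lia) v ltac:(unfold in01; lra)); lra. }
    assert (HC : 0 <= C).
    { apply RInt_ge_0; try lra; [apply (ex_kern n f g s t HCF); lia|]. intros v Hv.
      destruct (a_nn_le n f g s t HCF m ltac:(lia) v ltac:(unfold in01; lra)).
      apply Rmult_le_pos; auto. apply Kern_nn; auto. }
    destruct (Rle_lt_or_eq_dec 0 B) as [Bp|B0]; [lra| |].
    + apply div_le; auto.
    + assert (A = 0) by lra. rewrite H, <- B0. unfold Rdiv. rewrite Rmult_0_l.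
      apply Rmult_le_pos; auto. left. apply Rinv_0_lt_compat; auto.
  - intros x Hx D.
    set (m := posY r).
    assert (Hm1 : (posX s <= m)%nat) by (unfold m, posX, posY; lia).
    assert (Hm2 : (m < 2 * n)%nat) by (unfold m, posY; lia).
    assert (Hj : posX (r + 1) = S m) by (unfold m, posX, posY; lia).
    destruct (cond_ratio n f g s t HCF (posX (r + 1)) x ltac:(unfold posX; lia) ltac:(unfold posX; lia) Hx D) as [E Pa].
    rewrite E. rewrite trunc_fact by auto. rewrite Hj in *.
    assert (Hne : (S m <> posX s)%nat) by (unfold m, posX, posY in *; lia).
    rewrite (mk_S f g s t true m x Hne), (mk_S f g s t false m x Hne) in *.
    assert (Hev : Nat.even m = false).
    { unfold m, posY. replace (2 * r - 1)%nat with (S (2 * (r - 1))) by lia. apply even2. }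
    destruct (HCF _ (div2_lt n m Hm2)) as [Cf Cg].
    rewrite (DR_int (fun u => mk f g s t true m u * Kern f g m u x)) by (apply (ex_kern n f g s t HCF); lia).
    rewrite (DR_int (fun u => mk f g s t false m u * Kern f g m u x)) in Pa |- * by (apply (ex_kern n f g s t HCF); lia).
    rewrite (DR_one_mk n f g s t HCF true m), (DR_one_mk n f g s t HCF false m) by lia.
    set (A := RInt.RInt (fun u => mk f g s t true m u * 1) 0 1).
    set (B := RInt.RInt (fun u => mk f g s t false m u * 1) 0 1).
    set (C := RInt.RInt (fun u => mk f g s t true m u * Kern f g m u x) 0 1).
    set (Dd := RInt.RInt (fun u => mk f g s t false m u * Kern f g m u x) 0 1) in *.
    assert (Cr : C * B <= A * Dd).
    { apply (crossing (mk f g s t true m) (mk f g s t false m) (fun _ => 1) (fun v => Kern f g m v x)).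
      - intros v Hv. apply (a_nn_le n f g s t HCF m); auto; lia.
      - intros v v' Hv Hv' Hvv. apply (mono_ratio n f g s t HCF m); auto; lia.
      - intros v Hv. split; [lra | apply Kern_nn; auto].
      - intros v v' Hv Hv' Hvv. rewrite Rmult_1_l, Rmult_1_r. apply Kern_odd_inc; auto.
      - apply (ex_one n f g s t HCF); lia.
      - apply (ex_kern n f g s t HCF); lia.
      - apply (ex_one n f g s t HCF); lia.
      - apply (ex_kern n f g s t HCF); lia. }
    set (M := Rmax (f (Nat.div2 m) 1) (g (Nat.div2 m) 1)).
    assert (HDM : Dd <= M * B).
    { unfold Dd, B. rewrite <- RInt_scal_R by (apply (ex_one n f g s t HCF); lia).
      apply RInt_le; try lra. apply (ex_kern n f g s t HCF); lia. apply ex_RInt_scal_R. apply (ex_one n f g s t HCF); lia.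
      intros v Hv. destruct (a_nn_le n f g s t HCF m ltac:(lia) v ltac:(unfold in01; lra)).
      pose proof (Kern_le f g m Cf Cg v x) as KL. fold M in KL. nra. }
    assert (HB : 0 <= B).
    { apply RInt_ge_0; try lra; [apply (ex_one n f g s t HCF); lia|]. intros v Hv.
      destruct (a_nn_le n f g s t HCF m ltac:(lia) v ltac:(unfold in01; lra)). lra. }
    assert (Bp : 0 < B).
    { destruct (Rle_lt_or_eq_dec 0 B HB) as [?|B0]; auto. rewrite <- B0 in HDM. lra. }
    apply div_le; auto.
Qed.
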